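(* At points $(\tau,\eta)\in\Sigma$: if $a_{12}=0$, then $\partial_\gamma a_{12}\neq0$ and $\partial_\gamma a_{21}\neq0$; if $a_{21}=0$, then $\partial_\gamma a_{12}\neq0$ and $\partial_\gamma a_{21}\neq0$; if $a_{34}=0$, then $\partial_\gamma a_{34}\neq0$.
   Context: Constants of a basic state: $\dot v\neq0$, $\dot\rho>0$, $\dot H\neq0$, $\dot\alpha>0$ with $\dot\alpha\dot H^2\neq1$; $\varepsilon>0$ a parameter. Write $\tau=\gamma+i\delta$, $\Sigma=\{(\tau,\eta)\in\mathbb C\times\mathbb R:|\tau|^2+\eta^2=1,\ \gamma\ge0\}$, $\mu=\tau+i\dot v\eta$, and \[ a_{12}=-\frac{\mu^2\dot\rho+\eta^2\dot H^2}{\mu},\quad a_{21}=-\frac{\mu(\dot\alpha\dot\rho\mu^2+\eta^2)}{(\mu^2\dot\rho\dot\alpha+\eta^2)\dot H^2+\mu^2\dot\rho},\quad a_{34}=-\frac{\varepsilon^2\tau^2+\eta^2}{\varepsilon\tau}, \] considered at points where they are defined; $\partial_\gamma$ denotes the partial derivative in $\gamma$ with $\delta,\eta$ fixed. *)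

(* Defs.v *)
From Stdlib Require Import Reals.
From Coquelicot Require Import Coquelicot.
Open Scope R_scope.

Definition tau (g d : R) : C := (g, d).

Definition mu (v g d eta : R) : C := Cplus (tau g d) (Cmult Ci (RtoC (v * eta))).

Definition a12 (v rho H g d eta : R) : C :=
  let m := mu v g d eta in
  Copp (Cdiv (Cplus (Cmult (Cmult m m) (RtoC rho)) (RtoC (eta ^ 2 * H ^ 2))) m).

Definition a21_den (v rho H alpha g d eta : R) : C :=
  let m := mu v g d eta in
  Cplus (Cmult (Cplus (Cmult (Cmult m m) (RtoC (rho * alpha))) (RtoC (eta ^ 2)))
               (RtoC (H ^ 2)))
        (Cmult (Cmult m m) (RtoC rho)).

Definition a21 (v rho H alpha g d eta : R) : C :=
  let m := mu v g d eta in
  Copp (Cdiv (Cmult m (Cplus (Cmult (RtoC (alpha * rho)) (Cmult m m)) (RtoC (eta ^ 2))))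
             (a21_den v rho H alpha g d eta)).

Definition a34 (eps g d eta : R) : C :=
  let t := tau g d in
  Copp (Cdiv (Cplus (Cmult (RtoC (eps ^ 2)) (Cmult t t)) (RtoC (eta ^ 2)))
             (Cmult (RtoC eps) t)).

(* "partial_gamma f <> 0 at gamma": the partial derivative in gamma
   (delta, eta fixed) exists and is nonzero. f is given as a function of gamma. *)
Definition dgamma_nonzero (f : R -> C) (g : R) : Prop :=
  exists l : C, is_derive f g l /\ l <> RtoC 0.

(* Main.v *)
Require Import Defs.
From Stdlib Require Import Reals Lra Classical.
From Coquelicot Require Import Coquelicot.
Open Scope R_scope.
Definition CD (f : R -> C) (x : R) (l : C) : Prop :=
  is_derive (fun t => fst (f t)) x (fst l) /\ is_derive (fun t => snd (f t)) x (snd l).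

Lemma dext (f g : R -> R) x l l' : is_derive f x l -> (forall t, f t = g t) -> l = l' -> is_derive g x l'.
Proof. intros H E ->. eapply is_derive_ext; eauto. Qed.

Lemma CD_const c x : CD (fun _ => c) x (RtoC 0).
Proof. split; simpl; apply (is_derive_const (K:=R_AbsRing) (V:=R_NormedModule)). Qed.

Lemma CD_mu v d eta x : CD (fun t => (t, d + v*eta)) x (RtoC 1).
Proof. split; simpl. apply (is_derive_id (K:=R_AbsRing)).
  apply (is_derive_const (K:=R_AbsRing) (V:=R_NormedModule)). Qed.

Lemma CD_plus f g x f' g' : CD f x f' -> CD g x g' ->
  CD (fun t => Cplus (f t) (g t)) x (Cplus f' g').
Proof. intros [A B] [C D]; split; simpl.
  eapply dext; [eapply is_derive_plus; [exact A|exact C] | intro t; reflexivity | reflexivity].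
  eapply dext; [eapply is_derive_plus; [exact B|exact D] | intro t; reflexivity | reflexivity]. Qed.

Lemma CD_opp f x f' : CD f x f' -> CD (fun t => Copp (f t)) x (Copp f').
Proof. intros [A B]; split; simpl.
  eapply dext; [eapply is_derive_opp; exact A | intro t; reflexivity | reflexivity].
  eapply dext; [eapply is_derive_opp; exact B | intro t; reflexivity | reflexivity]. Qed.

Lemma CD_mult f g x f' g' : CD f x f' -> CD g x g' ->
  CD (fun t => Cmult (f t) (g t)) x (Cplus (Cmult f' (g x)) (Cmult (f x) g')).
Proof. intros [A B] [C D]; split; simpl.
  - eapply dext. eapply is_derive_minus; eapply Derive.is_derive_mult; [exact A|exact C|exact B|exact D].
    intro t; reflexivity.
    simpl. unfold minus, plus, opp; simpl. ring.
  - eapply dext. eapply is_derive_plus; eapply Derive.is_derive_mult; [exact A|exact D|exact B|exact C].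
    intro t; reflexivity.
    simpl. unfold plus; simpl. ring.

Qed.

Lemma CD_inv f x f' : CD f x f' -> f x <> RtoC 0 ->
  CD (fun t => Cinv (f t)) x (Copp (Cmult f' (Cinv (Cmult (f x) (f x))))).
Proof. intros [A B] Hn.
  assert (Hq : fst (f x) ^ 2 + snd (f x) ^ 2 <> 0).
  { intro E. apply Hn. destruct (f x) as [a b]; simpl in *.
    assert (a = 0) by nra. assert (b = 0) by nra. subst; reflexivity. }
  assert (Q : is_derive (fun t => fst (f t) ^ 2 + snd (f t) ^ 2) x
     (INR 2 * fst f' * fst (f x) ^ pred 2 + INR 2 * snd f' * snd (f x) ^ pred 2)).
  { eapply dext. eapply is_derive_plus; apply is_derive_pow; [exact A|exact B]. intro; reflexivity. reflexivity. }
  assert (Ef: f x = (fst (f x), snd (f x))) by (destruct (f x); reflexivity).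
  set (a := fst (f x)) in *. set (b := snd (f x)) in *.
  assert (Hd : (a*a-b*b)*((a*a-b*b)*1) + (a*b+b*a)*((a*b+b*a)*1) = (a^2+b^2)^2) by ring.
  split; simpl.
  - eapply dext. eapply Derive.is_derive_mult. exact A. apply is_derive_inv. exact Q. exact Hq.
    intro t; reflexivity.
    rewrite Ef; simpl. rewrite Hd. destruct f' as [a' b']; simpl. repeat match goal with |- context [fst (f ?y)] => change (fst (f y)) with a end. repeat match goal with |- context [snd (f ?y)] => change (snd (f y)) with b end. field. intro; apply Hq; nra.
  - eapply dext. eapply Derive.is_derive_mult. eapply is_derive_opp. exact B. apply is_derive_inv. exact Q. exact Hq.
    intro t; reflexivity.
    rewrite Ef; simpl. rewrite Hd. destruct f' as [a' b']; simpl. unfold opp; simpl. repeat match goal with |- context [fst (f ?y)] => change (fst (f y)) with a end. repeat match goal with |- context [snd (f ?y)] => change (snd (f y)) with b end. field. intro; apply Hq; nra.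

Qed.
Lemma CD_is_derive f x l : CD f x l -> is_derive f x l.
Proof.
  intros [H1 H2].
  unfold is_derive in *.
  apply (filterdiff_ext (F:=locally x)) with (f := fun t => (fst (f t), snd (f t))).
  { intros y. now destruct (f y). }
  apply (filterdiff_ext_lin (F:=locally x)) with
    (l1 := fun y => ((fun a b => (a,b)) (scal y (fst l)) (scal y (snd l)))).
  2:{ intros y. destruct l. reflexivity. }
  apply (filterdiff_comp_2 (fun t => fst (f t)) (fun t => snd (f t)) (fun a b => (a,b))).
  - exact H1.
  - exact H2.
  - apply (filterdiff_ext (F:= filtermap _ _)) with (f := fun t => t).
    { intros [a b]; reflexivity. }
    apply (filterdiff_ext_lin (F:= filtermap _ _)) with (l1 := fun t => t).
    2:{ intros [a b]; reflexivity. }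
    apply filterdiff_id.
Qed.

Lemma CD_mu' v d eta x : CD (fun t => mu v t d eta) x (RtoC 1).
Proof. split; simpl.
  - eapply dext. apply (is_derive_id (K:=R_AbsRing)). intro t; simpl; ring. reflexivity.
  - eapply dext. apply (is_derive_const (K:=R_AbsRing) (V:=R_NormedModule) (d + v*eta)). intro t; simpl; ring. reflexivity.
Qed.

Lemma CD_tau d x : CD (fun t => tau t d) x (RtoC 1).
Proof. split; simpl.
  - apply (is_derive_id (K:=R_AbsRing)).
  - apply (is_derive_const (K:=R_AbsRing) (V:=R_NormedModule)).
Qed.

Ltac cd1 := match goal with
 | |- CD (fun t => mu _ t _ _) _ _ => apply CD_mu'
 | |- CD (fun t => tau t _) _ _ => apply CD_tau
 | |- CD (fun _ => ?c) _ _ => apply CD_const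
 | |- CD (fun t => Copp (@?f t)) _ _ => eapply CD_opp
 | |- CD (fun t => Cmult (@?f t) (@?g t)) _ _ => eapply CD_mult
 | |- CD (fun t => Cplus (@?f t) (@?g t)) _ _ => eapply CD_plus
 | |- CD (fun t => Cinv (@?f t)) _ _ => eapply CD_inv
end.
Ltac cdsolve := repeat cd1.
Lemma CD_val f x l l' : CD f x l -> l = l' -> CD f x l'.
Proof. intros h ->; exact h. Qed.

Lemma L12 v rho H g d eta : mu v g d eta <> RtoC 0 ->
  CD (fun t => a12 v rho H t d eta) g
   (let m := mu v g d eta in
    Copp (Cminus (RtoC rho) (Cdiv (RtoC (eta ^ 2 * H ^ 2)) (Cmult m m)))).
Proof. intros hm.
  eapply CD_val. unfold a12, Cdiv; cbv zeta. cdsolve. exact hm.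
  cbv beta zeta. field. exact hm.
Qed.

Lemma L21 v rho H alpha g d eta : a21_den v rho H alpha g d eta <> RtoC 0 ->
  CD (fun t => a21 v rho H alpha t d eta) g
   (let m := mu v g d eta in
    let D := a21_den v rho H alpha g d eta in
    let N := Cmult m (Cplus (Cmult (RtoC (alpha * rho)) (Cmult m m)) (RtoC (eta ^ 2))) in
    let N' := Cplus (Cmult (RtoC 3) (Cmult (RtoC (alpha * rho)) (Cmult m m))) (RtoC (eta ^ 2)) in
    let D' := Cmult (Cmult (RtoC 2) m) (Cplus (Cmult (RtoC (rho * alpha)) (RtoC (H ^ 2))) (RtoC rho)) in
    Copp (Cdiv (Cminus (Cmult N' D) (Cmult N D')) (Cmult D D))).
Proof. intros hD.
  eapply CD_val. unfold a21, Cdiv; cbv zeta. unfold a21_den. cdsolve. exact hD.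
  cbv beta zeta. unfold a21_den in *. field. exact hD.
Qed.
Lemma RtoC_neq r : r <> 0 -> RtoC r <> RtoC 0.
Proof. intros h e. apply h. injection e. auto. Qed.

Lemma Cmult_eq0 a b : Cmult a b = RtoC 0 -> a = RtoC 0 \/ b = RtoC 0.
Proof. intros h. destruct (classic (a = RtoC 0)) as [?|ha]; auto.
  destruct (classic (b = RtoC 0)) as [?|hb]; auto.
  exfalso; exact (Cmult_neq_0 a b ha hb h). Qed.

Lemma div0 X Y : Y <> RtoC 0 -> Copp (Cdiv X Y) = RtoC 0 -> X = RtoC 0.
Proof. intros hY h.
  transitivity (Cmult (Copp (Copp (Cdiv X Y))) Y). field. exact hY.
  rewrite h. ring. Qed.

Lemma case1 (v rho H alpha : R)
  (hrho : 0 < rho) (hH : H <> 0) (halpha : 0 < alpha) (g d eta : R) :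
  mu v g d eta <> RtoC 0 -> a12 v rho H g d eta = RtoC 0 ->
     dgamma_nonzero (fun g' => a12 v rho H g' d eta) g /\
     dgamma_nonzero (fun g' => a21 v rho H alpha g' d eta) g.
Proof.
  intros hm h12.
  unfold a12 in h12; cbv zeta in h12. apply div0 in h12; [|exact hm].
  assert (hRh : RtoC rho <> RtoC 0) by (apply RtoC_neq; lra).
  assert (hAl : RtoC alpha <> RtoC 0) by (apply RtoC_neq; lra).
  assert (hHc : RtoC H <> RtoC 0) by (apply RtoC_neq; lra).
  assert (he : eta <> 0).
  { intro e0. rewrite e0 in h12, hm.
    apply (Cmult_neq_0 (Cmult (mu v g d 0) (mu v g d 0)) (RtoC rho)); auto.
    apply Cmult_neq_0; auto. rewrite <- h12.
    replace (RtoC (0 ^ 2 * H ^ 2)) with (RtoC 0) by (f_equal; ring). ring. }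
  assert (hE : RtoC eta <> RtoC 0) by (apply RtoC_neq; lra).
  assert (hK : RtoC (eta ^ 2 * H ^ 2) = Copp (Cmult (Cmult (mu v g d eta) (mu v g d eta)) (RtoC rho))).
  { transitivity (Cminus (Cplus (Cmult (Cmult (mu v g d eta) (mu v g d eta)) (RtoC rho)) (RtoC (eta ^ 2 * H ^ 2)))
       (Cmult (Cmult (mu v g d eta) (mu v g d eta)) (RtoC rho))). ring. rewrite h12. ring. }
  assert (hR : RtoC rho = Copp (Cdiv (Cmult (RtoC eta ^ 2) (RtoC H ^ 2)) (Cmult (mu v g d eta) (mu v g d eta)))).
  { rewrite RtoC_mult, !RtoC_pow in hK. rewrite hK. field. exact hm. }
  assert (hDv : a21_den v rho H alpha g d eta = Copp (Cmult (RtoC alpha) (Cmult (RtoC eta ^ 2) (RtoC H ^ 4)))).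
  { unfold a21_den; cbv zeta. rewrite !RtoC_mult, !RtoC_pow. rewrite hR. field. exact hm. }
  assert (hD : a21_den v rho H alpha g d eta <> RtoC 0).
  { rewrite hDv. intro e.
    apply (RtoC_neq (alpha * (eta ^ 2 * H ^ 4))).
    apply Rmult_integral_contrapositive_currified. lra.
    apply Rmult_integral_contrapositive_currified; apply pow_nonzero; auto.
    rewrite !RtoC_mult, !RtoC_pow.
    match type of e with Copp ?X = _ => transitivity (Copp (Copp X)); [ring | rewrite e; ring] end. }
  split.
  - eexists; split. apply CD_is_derive, L12; exact hm.
    cbv zeta. intro hl. rewrite hK in hl.
    apply (Cmult_neq_0 (RtoC (-2)) (RtoC rho)). apply RtoC_neq; lra. exact hRh.
    rewrite <- hl. field. exact hm.
  - eexists; split. apply CD_is_derive, L21; exact hD.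
    cbv zeta. intro hl. rewrite hDv in hl. rewrite !RtoC_mult, !RtoC_pow in hl. rewrite hR in hl.
    assert (hp : 0 < alpha ^ 2 * H ^ 4 - alpha * H ^ 2 + 2) by nra.
    apply (RtoC_neq _ (Rgt_not_eq _ _ hp)).
    match type of hl with ?l = _ =>
      transitivity (Copp (Cmult l (Cmult (RtoC alpha ^ 2) (RtoC H ^ 6)))) end.
    2:{ rewrite hl. ring. }
    replace (RtoC (alpha ^ 2 * H ^ 4 - alpha * H ^ 2 + 2)) with
      (Cplus (Cminus (Cmult (RtoC alpha ^ 2) (RtoC H ^ 4)) (Cmult (RtoC alpha) (RtoC H ^ 2))) (RtoC 2)).
    2:{ apply injective_projections; simpl; ring. }
    field. auto.
Qed.
Lemma case2 (v rho H alpha : R)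
  (hrho : 0 < rho) (hH : H <> 0) (halpha : 0 < alpha) (g d eta : R) :
  a21_den v rho H alpha g d eta <> RtoC 0 -> a21 v rho H alpha g d eta = RtoC 0 ->
     (mu v g d eta <> RtoC 0 -> dgamma_nonzero (fun g' => a12 v rho H g' d eta) g) /\
     dgamma_nonzero (fun g' => a21 v rho H alpha g' d eta) g.
Proof.
  intros hD h21.
  unfold a21 in h21; cbv zeta in h21. apply div0 in h21; [|exact hD].
  assert (hRh : RtoC rho <> RtoC 0) by (apply RtoC_neq; lra).
  assert (hAl : RtoC alpha <> RtoC 0) by (apply RtoC_neq; lra).
  assert (hHc : RtoC H <> RtoC 0) by (apply RtoC_neq; lra).
  assert (he : eta <> 0).
  { intro e0. rewrite e0 in h21, hD.
    destruct (classic (mu v g d 0 = RtoC 0)) as [hm0|hm0].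
    - apply hD. unfold a21_den; cbv zeta. rewrite hm0.
      apply injective_projections; simpl; ring.
    - apply (Cmult_neq_0 (mu v g d 0) (Cmult (RtoC (alpha * rho)) (Cmult (mu v g d 0) (mu v g d 0)))); auto.
      repeat apply Cmult_neq_0; auto. apply RtoC_neq; nra.
      rewrite <- h21. replace (RtoC (0 ^ 2)) with (RtoC 0) by (f_equal; ring). ring. }
  assert (hE2 : RtoC (eta ^ 2) <> RtoC 0) by (apply RtoC_neq; apply pow_nonzero; auto).
  split.
  - intros hm.
    assert (hY : Cplus (Cmult (RtoC (alpha * rho)) (Cmult (mu v g d eta) (mu v g d eta))) (RtoC (eta ^ 2)) = RtoC 0).
    { destruct (Cmult_eq0 _ _ h21) as [?|?]; [contradiction|assumption]. }
    assert (hE : RtoC (eta ^ 2) = Copp (Cmult (RtoC (alpha * rho)) (Cmult (mu v g d eta) (mu v g d eta)))).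
    { match type of hY with Cplus ?A ?B = _ => transitivity (Cminus (Cplus A B) A); [ring | rewrite hY; ring] end. }
    eexists; split. apply CD_is_derive, L12; exact hm.
    cbv zeta. intro hl. rewrite RtoC_mult, hE in hl.
    assert (hp : 0 < rho * (1 + alpha * H ^ 2)) by (apply Rmult_lt_0_compat; nra).
    apply (RtoC_neq (- (rho * (1 + alpha * H ^ 2)))). lra.
    replace (RtoC (- (rho * (1 + alpha * H ^ 2)))) with
      (Copp (Cmult (RtoC rho) (Cplus (RtoC 1) (Cmult (RtoC alpha) (RtoC H ^ 2))))) by
      (apply injective_projections; simpl; ring).
    rewrite <- hl. rewrite !RtoC_mult, !RtoC_pow. field. exact hm.
  - eexists; split. apply CD_is_derive, L21; exact hD.
    cbv zeta. intro hl. rewrite h21 in hl.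
    match type of hl with Copp (Cdiv (Cminus (Cmult ?N' ?D) _) _) = _ =>
      assert (hN' : N' = RtoC 0) by (transitivity (Copp (Cmult (Copp (Cdiv (Cminus (Cmult N' D) (Cmult (RtoC 0) (Cmult (Cmult (RtoC 2) (mu v g d eta)) (Cplus (Cmult (RtoC (rho * alpha)) (RtoC (H ^ 2))) (RtoC rho))))) (Cmult D D))) D)); [field; exact hD | rewrite hl; ring]) end.
    destruct (Cmult_eq0 _ _ h21) as [hm0|hY].
    + apply hE2. rewrite <- hN'. rewrite hm0. ring.
    + apply hE2. 
      match type of hY with Cplus ?A ?B = _ =>
       transitivity (Cmult (Cinv (RtoC (-2))) (Cminus (Cplus (Cmult (RtoC 3) A) B) (Cmult (RtoC 3) (Cplus A B)))) end.
      field.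
      rewrite hN', hY. ring.
Qed.

Lemma case3 eps g d eta : 0 < eps -> tau g d <> RtoC 0 -> a34 eps g d eta = RtoC 0 -> dgamma_nonzero (fun g' => a34 eps g' d eta) g.
Proof. intros he ht h.
assert (hE : RtoC eps <> RtoC 0) by (apply RtoC_neq; lra).
eexists; split. apply CD_is_derive. unfold a34, Cdiv; cbv zeta.
cdsolve. apply Cmult_neq_0; auto.
cbv beta.
unfold a34, Cdiv in h; cbv zeta in h.
set (t := tau g d) in *.
set (X := Cplus (Cmult (RtoC (eps ^ 2)) (Cmult t t)) (RtoC (eta ^ 2))) in *.
assert (hX : X = RtoC 0).
{ transitivity (Cmult (Copp (Copp (Cmult X (Cinv (Cmult (RtoC eps) t))))) (Cmult (RtoC eps) t)).
  field. split; auto. rewrite h. ring. }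
rewrite hX. rewrite RtoC_pow.
intro hl.
assert (hl2 : Cmult (RtoC (-2)) (RtoC eps) = RtoC 0).
{ rewrite <- hl. field. split; auto. }
revert hl2. apply Cmult_neq_0; auto. apply RtoC_neq; lra.
Qed.

Theorem lemma7p5 (v rho H alpha eps : R)
  (hv : v <> 0) (hrho : 0 < rho) (hH : H <> 0) (halpha : 0 < alpha)
  (hαH : alpha * H ^ 2 <> 1) (heps : 0 < eps)
  (g d eta : R) (hΣ : g ^ 2 + d ^ 2 + eta ^ 2 = 1) (hg : 0 <= g) :
  (* a12 = 0 (a12 defined: mu <> 0) *)
  (mu v g d eta <> RtoC 0 -> a12 v rho H g d eta = RtoC 0 ->
     dgamma_nonzero (fun g' => a12 v rho H g' d eta) g /\
     dgamma_nonzero (fun g' => a21 v rho H alpha g' d eta) g) /\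
  (* a21 = 0 (a21 defined: denominator <> 0) *)
  (a21_den v rho H alpha g d eta <> RtoC 0 -> a21 v rho H alpha g d eta = RtoC 0 ->
     (mu v g d eta <> RtoC 0 -> dgamma_nonzero (fun g' => a12 v rho H g' d eta) g) /\
     dgamma_nonzero (fun g' => a21 v rho H alpha g' d eta) g) /\
  (* a34 = 0 (a34 defined: tau <> 0) *)
  (tau g d <> RtoC 0 -> a34 eps g d eta = RtoC 0 ->
     dgamma_nonzero (fun g' => a34 eps g' d eta) g).
Proof.
  split; [|split].
  - apply case1; assumption.
  - apply case2; assumption.
  - apply case3; assumption.
Qed.
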